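(* Let $H=(L\uplus R,E_H)$ be a bipartite graph and $\alpha>1$ a real number such that $|N_H(A)|\ge\alpha|A|$ for every $A\subseteq L$. Let $F\subseteq E_H$ be a matching in which not all vertices of $L$ are matched. Then there is an augmenting path with respect to $F$ of length at most $2D+1$, where $D=\lfloor\log_\alpha|L|\rfloor+1$.
   Context: $N_H(A)$ denotes the set of vertices adjacent in $H$ to some vertex of $A$. An augmenting path with respect to a matching $F$ is a path starting at an unmatched vertex of $L$, ending at an unmatched vertex of $R$, whose edges alternate between edges not in $F$ and edges in $F$. *)

(* Defs.v *)
From HB Require Import structures.
From mathcomp Require Import all_boot all_order all_algebra.
From mathcomp Require Import all_classical all_reals all_analysis.
Set Implicit Arguments. Unset Strict Implicit. Unset Printing Implicit Defensive.
Import Order.TTheory GRing.Theory Num.Theory.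
Local Open Scope ring_scope.

Definition nbhd (L R : finType) (adj : L -> R -> bool) (A : {set L}) : {set R} :=
  [set r | [exists l in A, adj l r]].

Definition is_matching (L R : finType) (adj : L -> R -> bool) (F : {set L * R}) :=
  (forall e, e \in F -> adj e.1 e.2) /\
  (forall e e', e \in F -> e' \in F -> (e.1 = e'.1 \/ e.2 = e'.2) -> e = e').

Definition matchedL (L R : finType) (F : {set L * R}) (l : L) :=
  [exists r, (l, r) \in F].
Definition matchedR (L R : finType) (F : {set L * R}) (r : R) :=
  [exists l, (l, r) \in F].

(* An alternating path l_0 r_0 l_1 r_1 ... l_k r_k is encoded as the
   nonempty sequence p = [:: (l_0,r_0); ...; (l_k,r_k)] of its non-matching
   edges; the matching edges are (l_{i+1}, r_i). Its length (number of edges)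
   is 2(k+1) - 1. *)
Definition augmenting_path (L R : finType) (adj : L -> R -> bool)
    (F : {set L * R}) (p : seq (L * R)) : Prop :=
  match p with
  | [::] => False
  | e0 :: _ =>
    [/\ uniq (map fst p) /\ uniq (map snd p),
        all (fun e => adj e.1 e.2 && (e \notin F)) p,
        sorted (fun e e' => (e'.1, e.2) \in F) p,
        ~~ matchedL F e0.1 &
        ~~ matchedR F (last e0 p).2]
  end.

Definition path_length (L R : Type) (p : seq (L * R)) : nat := (2 * size p).-1.

(* Main.v *)
Require Import Defs.
From HB Require Import structures.
From mathcomp Require Import all_boot all_order all_algebra.
From mathcomp Require Import all_classical all_reals all_analysis.
From mathcomp Require Import zify.
Import Order.TTheory GRing.Theory Num.Theory.
Set Implicit Arguments. Unset Strict Implicit.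

Definition arel (L R : finType) (F : {set L * R}) := fun e e' : L * R => (e'.1, e.2) \in F.

Definition valid (L R : finType) (adj : L -> R -> bool) (F : {set L * R}) (e0 : L * R) (s : seq (L * R)) :=
  [/\ uniq (map fst (e0 :: s)), uniq (map snd (e0 :: s)),
      all (fun e => adj e.1 e.2 && (e \notin F)) (e0 :: s),
      path (arel F) e0 s & ~~ matchedL F e0.1].

Lemma lemP (L R : finType) (F : {set L * R}) (s : seq (L * R)) (e0 : L * R) r :
  path (arel F) e0 s -> r \in map snd (belast e0 s) ->
  exists s1 x s2, s = s1 ++ x :: s2 /\ r = (last e0 s1).2.
Proof.
elim: s e0 => [|x s IH] e0 //=.
move=> /andP[hx hp]; rewrite inE => /orP[/eqP->|hr].
  by exists [::], x, s.
have [s1 [y [s2 [-> ->]]]] := IH x hp hr.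
by exists (x :: s1), y, s2.
Qed.

Lemma lemQ (L R : finType) (F : {set L * R}) (s : seq (L * R)) (e0 : L * R) x :
  path (arel F) e0 s -> x \in map fst (e0 :: s) ->
  x = e0.1 \/ exists2 y, y \in map snd (belast e0 s) & (x, y) \in F.
Proof.
elim: s e0 => [|z s IH] e0 /=.
  by rewrite inE => _ /eqP ->; left.
move=> /andP[hz hp]; rewrite inE => /orP[/eqP->|hx]; first by left.
right; have [->|[y hy hxy]] := IH z hp hx.
  by exists e0.2; rewrite ?inE ?eqxx.
by exists y => //; rewrite inE hy orbT.
Qed.

Lemma lemA (L R : finType) adj (F : {set L * R}) e0 s l :
  is_matching adj F -> valid adj F e0 s -> (l, (last e0 s).2) \in F ->
  l \notin map fst (e0 :: s).
Proof.
move=> [_ hM] [u1 u2 _ hp hm] hl; apply/negP => /(lemQ hp) [hx|[y hy hly]].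
  by move: hm; rewrite -hx /matchedL; case/negP; apply/existsP; exists (last e0 s).2.
have := hM _ _ hly hl (or_introl erefl); case=> hyl.
move: u2; rewrite lastI map_rcons rcons_uniq => /andP[hn _].
by move: hn; rewrite -hyl hy.
Qed.

Lemma valid_prefix (L R : finType) adj (F : {set L * R}) e0 s1 s2 :
  valid adj F e0 (s1 ++ s2) -> valid adj F e0 s1.
Proof.
case; rewrite -cat_cons !map_cat !cat_uniq all_cat cat_path.
by move=> /andP[? _] /andP[? _] /andP[? _] /andP[? _] ?; split.
Qed.

Lemma valid_ext (L R : finType) adj (F : {set L * R}) e0 s l r :
  is_matching adj F -> valid adj F e0 s -> adj l r -> (l, r) \notin F ->
  r \notin map snd (e0 :: s) -> (l, (last e0 s).2) \in F ->
  valid adj F e0 (rcons s (l, r)).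
Proof.
move=> hM hv hadj hlr hr hl.
have hA := lemA hM hv hl.
case: hv => u1 u2 ha hp hm.
split => //; rewrite -?rcons_cons ?map_rcons ?rcons_uniq ?all_rcons ?rcons_path.
- by rewrite hA u1.
- by rewrite hr u2.
- by rewrite ha /= hadj hlr.
- by rewrite hp.
Qed.

Definition reach (L R : finType) adj (F : {set L * R}) (l0 : L) (k : nat) (l : L) : Prop :=
  l = l0 \/ exists e0 s, [/\ valid adj F e0 s, (size s < k)%N & (l, (last e0 s).2) \in F].

Definition Aset (L R : finType) adj (F : {set L * R}) (l0 : L) (k : nat) : {set L} :=
  [set l | `[< reach adj F l0 k l >]].

Lemma claim (L R : finType) adj (F : {set L * R}) (l0 : L) k :
  is_matching adj F -> ~~ matchedL F l0 ->
  ~ (exists p, augmenting_path adj F p /\ (size p <= k.+1)%N) ->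
  forall r, r \in nbhd adj (Aset adj F l0 k) ->
  exists2 l', (l', r) \in F & l' \in Aset adj F l0 k.+1.
Proof.
move=> hM hl0 hn r; rewrite inE => /existsP [l /andP[]].
rewrite inE => /asboolP [->|[e0 [s [hv hs hF']]]] hadj.
  have hl0r : (l0, r) \notin F.
    by apply/negP => h; move: hl0; rewrite /matchedL; case/negP; apply/existsP; exists r.
  case: (boolP (matchedR F r)) => [/existsP [l' hl'] | hr].
    exists l' => //; rewrite inE; apply/asboolP; right; exists (l0, r), [::].
    by split => //; split => //=; rewrite hadj hl0r.
  exfalso; apply: hn; exists [:: (l0, r)]; split => //.
  by split => //=; rewrite hadj hl0r.
case: (boolP ((l, r) \in F)) => hlr.
  exists l => //; rewrite inE; apply/asboolP; right; exists e0, s; split => //.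
  by apply: ltn_trans hs _.
case: (boolP (r \in map snd (e0 :: s))) => hrin.
  move: hrin; rewrite lastI map_rcons mem_rcons inE => /orP [/eqP hr|hr].
    by move: hlr; rewrite hr hF'.
  have hp : path (arel F) e0 s by case: hv.
  have [s1 [x [s2 [hs12 hr1]]]] := lemP hp hr.
  have hx : (x.1, r) \in F.
    move: hp; rewrite hs12 cat_path => /andP[_] /= /andP[+ _].
    by rewrite /arel /= -hr1.
  exists x.1 => //.
  rewrite inE; apply/asboolP; right; exists e0, s1; split.
  - by apply: (@valid_prefix _ _ _ _ _ _ (x :: s2)); rewrite -hs12.
  - apply: leq_ltn_trans _ (ltn_trans hs _) => //.
    by rewrite hs12 size_cat /= leq_addr.
  - by rewrite -hr1.

have hv' := valid_ext hM hv hadj hlr hrin hF'.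
case: (boolP (matchedR F r)) => [/existsP [l' hl'] | hr].
  exists l' => //; rewrite inE; apply/asboolP; right; exists e0, (rcons s (l, r)).
  by split => //; rewrite ?size_rcons ?last_rcons.
exfalso; apply: hn; exists (e0 :: rcons s (l, r)); split.
  case: hv' => *; split => //=.
  by rewrite last_rcons.
by rewrite [size _]/= size_rcons.
Qed.

Lemma step (L R : finType) adj (F : {set L * R}) (l0 : L) k :
  is_matching adj F -> ~~ matchedL F l0 ->
  (exists p, augmenting_path adj F p /\ (size p <= k.+1)%N) \/
  (#|nbhd adj (Aset adj F l0 k)| < #|Aset adj F l0 k.+1|)%N.
Proof.
move=> hM hl0; case: (EM (exists p, augmenting_path adj F p /\ (size p <= k.+1)%N)) => [h|hn].
  by left.
right; have hc := claim hM hl0 hn.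
have [_ hMM] := hM.
set N := nbhd adj _; set A := Aset _ _ _ _.
set E := [set e in F | e.2 \in N].
have h1 : (#|N| <= #|[set e.2 | e in E]|)%N.
  apply: subset_leq_card; apply/fintype.subsetP => r hr.
  have [l' hl' _] := hc r hr.
  by apply/imsetP; exists (l', r) => //; rewrite inE hl' hr.
have h2 : #|[set e.2 | e in E]| = #|E|.
  apply: card_in_imset => e e'; rewrite !inE => /andP[he _] /andP[he' _] h.
  by apply: hMM => //; right.
have h3 : #|[set e.1 | e in E]| = #|E|.
  apply: card_in_imset => e e'; rewrite !inE => /andP[he _] /andP[he' _] h.
  by apply: hMM => //; left.
have hl0A : l0 \in A by rewrite inE; apply/asboolP; left.
have h4 : [set e.1 | e in E] \subset A :\ l0.
  apply/fintype.subsetP => x /imsetP [e]; rewrite inE => /andP[he hN] ->.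
  have [l' hl' hA] := hc _ hN.
  have : (l', e.2) = e by apply: hMM => //; right.
  move=> <- /=; rewrite in_setD1 hA andbT; apply/eqP => hx; move: hl0.
  by rewrite -hx /matchedL; case/negP; apply/existsP; exists e.2.
have := subset_leq_card h4; rewrite h3 -h2 (cardsD1 l0 A) hl0A add1n.
by move=> h5; apply: leq_ltn_trans h1 _; rewrite ltnS.
Qed.

Local Open Scope ring_scope.

Lemma grow (RR : realType) (L R : finType) (adj : L -> R -> bool) (alpha : RR) (halpha : 1 < alpha)
    (hexp : forall A : {set L}, alpha * (#|A|%:R) <= (#|nbhd adj A|%:R))
    (F : {set L * R}) (hF : is_matching adj F) l0 (hl0 : ~~ matchedL F l0) k :
  (exists p, augmenting_path adj F p /\ (size p <= k)%N) \/
  alpha ^+ k <= #|Aset adj F l0 k|%:R.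
Proof.
elim: k => [|k [[p [hp hs]]|IH]].
- right; rewrite expr0 ler1n; apply/card_gt0P; exists l0.
  by rewrite inE; apply/asboolP; left.
- by left; exists p; split => //; apply: leq_trans hs _.
- have [h|h] := step k hF hl0; first by left.
  right; rewrite exprS.
  apply: le_trans (ler_wpM2l _ IH) _; first by apply: ltW; apply: lt_trans halpha.
  apply: le_trans (hexp _) _; rewrite ler_nat; exact: ltnW.
Qed.


Unset Implicit Arguments. Set Strict Implicit.

Theorem lemma6 (RR : realType) (L R : finType) (adj : L -> R -> bool)
    (alpha : RR) (halpha : 1 < alpha)
    (hexp : forall A : {set L}, alpha * (#|A|%:R) <= (#|nbhd adj A|%:R))
    (F : {set L * R}) (hF : is_matching adj F)
    (hunm : exists l : L, ~~ matchedL F l) :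
  exists p : seq (L * R), augmenting_path adj F p /\
    ((path_length p)%:Z <= 2 * (Num.floor (ln (#|L|%:R : RR) / ln alpha) + 1) + 1)%R.
Proof.
move: hunm => [l0 hl0].
have hlna : 0 < ln alpha := ln_gt0 halpha.
have hL : (0 < #|L|)%N by apply/card_gt0P; exists l0.
have hL1 : (1 : RR) <= #|L|%:R by rewrite ler1n.
have hx0 : 0 <= ln (#|L|%:R : RR) / ln alpha.
  by apply: divr_ge0; [apply: ln_ge0 | apply: ltW].
have hlt := floorD1_gt (ln (#|L|%:R : RR) / ln alpha).
move: hx0; rewrite -floor_ge0.
move: hlt; case: (Num.floor _) => [n|n] hlt // _.
have [[p [hp hs]]|hg] := grow halpha hexp hF hl0 n.+1.
  exists p; split => //.
  have h : (path_length p <= (2 * n.+1).+1)%N by rewrite /path_length; lia.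
  lia.
exfalso.
have hlt' : ln (#|L|%:R : RR) < ln (alpha ^+ n.+1).
  rewrite lnXn; last by apply: lt_trans halpha.
  move: hlt; rewrite -PoszD addn1 ltr_pdivrMr // mulrC.
  by rewrite mulrzr.
move: hlt'; rewrite ltr_ln ?posrE ?exprn_gt0 //; first last.
- by apply: lt_trans halpha.
- by rewrite ltr0n.
apply/negP; rewrite -leNgt.
apply: le_trans hg _; rewrite ler_nat; exact: max_card.
Qed.
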